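(* Let $n\ge1$ and consider $n$ elements with states ${\bf x}_i(t)\in\mathbb{R}^m$ and dynamics $$\dot{\bf x}_i(t)=\sum_{j\in\mathcal{N}_i}{\bf K}_{ji}\big({\bf x}_j(t-T_{ji})-{\bf x}_i(t)\big),\qquad i=1,\dots,n,$$ where $\mathcal{N}_i\subseteq\{1,\dots,n\}\setminus\{i\}$ is a fixed set of neighbors of $i$, each ${\bf K}_{ji}$ is a constant symmetric positive definite $m\times m$ matrix, and each $T_{ji}\ge0$ is a constant delay (delays may differ from link to link and between the two directions of a link). Assume the network (directed graph with an edge $j\to i$ whenever $j\in\mathcal{N}_i$) is connected, and that the links are either bidirectional with ${\bf K}_{ji}={\bf K}_{ij}$, or unidirectional but formed into closed rings with identical gains within each ring (or a mixture of both types). Then, regardless of the values of the delays and of the (continuous) initial functions, every solution asymptotically reaches group agreement: ${\bf x}_i(t)-{\bf x}_j(t)\to0$ as $t\to\infty$ for all $i,j$. *)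

(* Defs.v *)
From HB Require Import structures.
From mathcomp Require Import all_boot all_order all_algebra.
From mathcomp Require Import all_classical all_reals all_analysis.
Set Implicit Arguments. Unset Strict Implicit. Unset Printing Implicit Defensive.
Import Order.TTheory GRing.Theory Num.Theory.
Import numFieldNormedType.Exports.
Local Open Scope ring_scope.

Definition sym_posdef (R : realType) (m : nat) (K : 'M[R]_m) : Prop :=
  K^T = K /\ forall v : 'cV[R]_m, v != 0 -> 0 < (v^T *m K *m v) 0 0.

Definition network_connected (n : nat) (N : 'I_n -> {set 'I_n}) : Prop :=
  forall a b : 'I_n, connect [rel u v | (u \in N v) || (v \in N u)] a b.

(* The directed edge j -> i belongs to the ring r (r lists the nodes of a
   closed directed ring in order: r_0 -> r_1 -> ... -> r_{k-1} -> r_0). *)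
Definition ring_edge (n : nat) (r : seq 'I_n) (j i : 'I_n) : bool :=
  (j \in r) && (next r j == i).

Definition link_structure (R : realType) (n m : nat)
    (N : 'I_n -> {set 'I_n}) (K : 'I_n -> 'I_n -> 'M[R]_m) : Prop :=
  exists (B : rel 'I_n) (rings : seq (seq 'I_n)),
    [/\ (forall j i, B j i -> [/\ j \in N i, i \in N j, B i j & K j i = K i j]),
        (forall r, r \in rings ->
           [/\ uniq r, (2 <= size r)%N,
               (forall j i, ring_edge r j i -> j \in N i) &
               (forall j i j' i', ring_edge r j i -> ring_edge r j' i' ->
                  K j i = K j' i')]) &
        (forall j i, j \in N i ->
           (B j i + count (fun r => ring_edge r j i) rings = 1)%N)].

(* Main.v *)
Require Import Defs.
From HB Require Import structures.
From mathcomp Require Import all_boot all_order all_algebra.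
From mathcomp Require Import all_classical all_reals all_analysis.
From mathcomp Require Import ring lra.
Import Order.TTheory GRing.Theory Num.Theory.
Import numFieldNormedType.Exports.
Local Open Scope classical_set_scope.
Local Open Scope ring_scope.
Set Implicit Arguments. Unset Strict Implicit.

Lemma is_deriveM' (R : realType) (f g : R -> R) (t df dg : R) :
  is_derive t 1 f df -> is_derive t 1 g dg ->
  is_derive t 1 (fun s => f s * g s) (f t * dg + g t * df).
Proof. move=> hf hg; exact: (@is_deriveM R R f g t 1 df dg hf hg). Qed.

Lemma is_derive_bigsum (R : realType) (I : finType) (P : pred I)
  (f : I -> R -> R) (df : I -> R) (t : R) :
  (forall i, P i -> is_derive t 1 (f i) (df i)) ->
  is_derive t 1 (fun s => \sum_(i | P i) f i s) (\sum_(i | P i) df i).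
Proof.
move=> h.
have -> : (fun s => \sum_(i | P i) f i s) = \sum_(i | P i) f i.
  by apply/funext => s; rewrite fct_sumE.
elim/big_ind2 : _ => //.
- exact: is_derive_cst.
- by move=> f1 d1 f2 d2 h1 h2; exact: is_deriveD.
Qed.

Lemma is_derive_entry (R : realType) (m k : nat) (y : R -> 'M[R]_(m, k))
  (dy : 'M[R]_(m, k)) (t : R) a b :
  is_derive t 1 y dy -> is_derive t 1 (fun s => y s a b) (dy a b).
Proof.
move=> [hd hv]; split.
  by move/derivable_mxP : hd; apply.
by rewrite -hv derive_mx // mxE.
Qed.

Lemma is_derive_delay (R : realType) (f : R -> R) (c t df : R) :
  is_derive (t - c) 1 f df -> is_derive t 1 (fun s => f (s - c)) df.
Proof.
move=> h.
have := @is_derive1_comp R f (shift (- c)) t df 1 h (is_derive_shift _ _ _).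
by rewrite mulr1.
Qed.

Lemma derivable_cont (R : realType) (f : R -> R) (t : R) :
  derivable f t 1 -> {for t, continuous f}.
Proof.
by move=> /derivable1_diffP/differentiable_continuous.
Qed.

Definition antid {R : realType} (h : R -> R) (a : R) (t : R) : R :=
  (\int[@lebesgue_measure R]_(s in [set` `[a, t]]) h s)%R.

Lemma antid_derive (R : realType) (h : R -> R) (a : R) :
  (forall s, a <= s -> {for s, continuous h}) ->
  forall x, a < x -> is_derive x 1 (antid h a) (h x).
Proof.
move=> hc x ax.
have xu : x < x + 1 by rewrite ltrDl.
have hi : (@lebesgue_measure R).-integrable `[a, x + 1] (EFin \o h).
  apply: continuous_compact_integrable; first exact: segment_compact.
  apply: continuous_in_subspaceT => s; rewrite inE /= in_itv /= => /andP[+ _].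
  exact: hc.
have [d1 d2] := continuous_FTC1_closed (f:=h) xu hi ax (hc _ (ltW ax)).
split; first exact: d1.
by rewrite -derive1E.
Qed.

Definition Bf {R : realType} {m : nat} (K : 'M[R]_m) (u w : 'cV[R]_m) : R :=
  (u^T *m K *m w) 0 0.

Lemma BfE (R : realType) m (K : 'M[R]_m) u w :
  Bf K u w = \sum_(b < m) \sum_(a < m) K a b * (u a 0 * w b 0).
Proof.
rewrite /Bf mxE; apply: eq_bigr => b _; rewrite mxE big_distrl /=.
by apply: eq_bigr => a _; rewrite !mxE; ring.
Qed.

Lemma BfBl (R : realType) m (K : 'M[R]_m) u v w :
  Bf K (u - v) w = Bf K u w - Bf K v w.
Proof.
rewrite !BfE -sumrB; apply: eq_bigr => b _; rewrite -sumrB.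
by apply: eq_bigr => a _; rewrite !mxE; ring.
Qed.

Lemma BfBr (R : realType) m (K : 'M[R]_m) u v w :
  Bf K u (v - w) = Bf K u v - Bf K u w.
Proof.
rewrite !BfE -sumrB; apply: eq_bigr => b _; rewrite -sumrB.
by apply: eq_bigr => a _; rewrite !mxE; ring.
Qed.

Lemma BfZl (R : realType) m (K : 'M[R]_m) (c : R) u w :
  Bf K (c *: u) w = c * Bf K u w.
Proof.
rewrite !BfE mulr_sumr; apply: eq_bigr => b _; rewrite mulr_sumr.
by apply: eq_bigr => a _; rewrite !mxE; ring.
Qed.

Lemma BfZr (R : realType) m (K : 'M[R]_m) (c : R) u w :
  Bf K u (c *: w) = c * Bf K u w.
Proof.
rewrite !BfE mulr_sumr; apply: eq_bigr => b _; rewrite mulr_sumr.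
by apply: eq_bigr => a _; rewrite !mxE; ring.
Qed.

Lemma Bf0r (R : realType) m (K : 'M[R]_m) u : Bf K u 0 = 0.
Proof. by rewrite BfE big1 // => b _; rewrite big1 // => a _; rewrite mxE; ring. Qed.

Lemma Bf_sym (R : realType) m (K : 'M[R]_m) u w :
  K^T = K -> Bf K u w = Bf K w u.
Proof.
move=> KT; rewrite !BfE exchange_big /=; apply: eq_bigr => b _.
apply: eq_bigr => a _.
have -> : K b a = K^T a b by rewrite mxE.
by rewrite KT; ring.
Qed.

Lemma Bf_ge0 (R : realType) m (K : 'M[R]_m) w :
  sym_posdef K -> 0 <= Bf K w w.
Proof.
move=> [_ hp]; have [->|w0] := eqVneq w 0; first by rewrite Bf0r.
exact/ltW/hp.
Qed.

Lemma Bf_CS (R : realType) m (K : 'M[R]_m) u w :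
  sym_posdef K -> Bf K u w ^+ 2 <= Bf K u u * Bf K w w.
Proof.
move=> hK; have [->|w0] := eqVneq w 0.
  by rewrite !Bf0r expr0n /= mulr0.
have cpos : 0 < Bf K w w by case: hK => _ hp; exact: hp.
set b := Bf K u w; set c := Bf K w w.
have := @Bf_ge0 _ _ K (u - (b / c) *: w) hK.
rewrite !BfBl !BfBr !BfZl !BfZr.
rewrite (@Bf_sym _ _ K w u); last by case: hK.
rewrite -/b -/c => h.
have e : Bf K u u - b / c * b - (b / c * b - b / c * (b / c * c))
         = Bf K u u - b ^+ 2 / c.
  by field; rewrite gt_eqF.
rewrite e subr_ge0 in h.
by rewrite -ler_pdivrMr // mulrC.
Qed.

Lemma posdef_unit {R : realType} {m : nat} (K : 'M[R]_m) : sym_posdef K -> K \in unitmx.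
Proof.
move=> [KT hp]; rewrite unitmxE unitfE; apply/negP => /det0P [v v0 vK].
have w0 : v^T != 0 by apply: contra v0 => /eqP h; rewrite -(trmxK v) h trmx0.
have := hp _ w0; rewrite trmxK -mulmxA.
have -> : K *m v^T = 0 by rewrite -{1}KT -trmx_mul vK trmx0.
by rewrite mulmx0 mxE ltxx.
Qed.

Lemma coord_bound {R : realType} {m : nat} (K : 'M[R]_m) (a : 'I_m) :
  sym_posdef K -> exists C, 0 <= C /\ forall w : 'cV[R]_m, (w a 0) ^+ 2 <= C * Bf K w w.
Proof.
move=> hK; have Ku := @posdef_unit _ _ K hK.
pose u : 'cV[R]_m := invmx K *m delta_mx a 0.
exists (Bf K u u); split; first exact: Bf_ge0.
move=> w.
have -> : w a 0 = Bf K u w.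
  rewrite /Bf /u trmx_mul trmx_inv; case: (hK) => KT _; rewrite KT.
  rewrite -(mulmxA _ (invmx K) K) mulVmx // mulmx1 trmx_delta.
  by rewrite -rowE mxE.
exact: Bf_CS.
Qed.

Lemma is_derive_Bf {R : realType} {m : nat} (K : 'M[R]_m) (y z : R -> 'cV[R]_m)
  (dy dz : 'cV[R]_m) (t : R) :
  is_derive t 1 y dy -> is_derive t 1 z dz ->
  is_derive t 1 (fun s => Bf K (y s) (z s)) (Bf K dy (z t) + Bf K (y t) dz).
Proof.
move=> hy hz.
have -> : (fun s => Bf K (y s) (z s)) =
   (fun s => \sum_(b < m) \sum_(a < m) K a b * (y s a 0 * z s b 0)).
  by apply/funext => s; rewrite BfE.
apply: is_derive_eq.
  apply: is_derive_bigsum => b _.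
  apply: is_derive_bigsum => a _.
  have h1 := is_deriveM' (@is_derive_entry _ _ _ y dy t a 0 hy) (@is_derive_entry _ _ _ z dz t b 0 hz).
  exact: (@is_deriveZ R R R _ (K a b) t 1 _ h1).
rewrite !BfE -big_split; apply: eq_bigr => b _; rewrite -big_split.
by apply: eq_bigr => a _ /=; rewrite /GRing.scale /=; ring.
Qed.

Lemma fun_sum_closed {R : realType} (Q : (R -> R) -> Prop) :
  Q (fun _ => 0) -> (forall f g, Q f -> Q g -> Q (fun t => f t + g t)) ->
  forall (I : Type) (r : seq I) (P : pred I) (F : I -> R -> R),
  (forall i, P i -> Q (F i)) -> Q (fun t => \sum_(i <- r | P i) F i t).
Proof.
move=> Q0 QD I r P F hF; elim: r => [|a r IH].
  by under eq_fun do rewrite big_nil.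
under eq_fun do rewrite big_cons.
case Pa: (P a) => //.
exact: QD (hF _ Pa) IH.
Qed.

Definition EB {R : realType} (f : R -> R) :=
  exists C T0 : R, forall t, T0 <= t -> `|f t| <= C.
Definition TZ {R : realType} (f : R -> R) :=
  forall e : R, 0 < e -> exists T0 : R, forall t, T0 <= t -> `|f t| <= e.

Lemma EB_cst {R : realType} (c : R) : EB (fun _ => c).
Proof. by exists `|c|, 0. Qed.

Lemma EB_add {R : realType} (f g : R -> R) : EB f -> EB g -> EB (fun t => f t + g t).
Proof.
move=> [C1 [T1 h1]] [C2 [T2 h2]]; exists (C1 + C2), (Num.max T1 T2) => t.
rewrite ge_max => /andP[a1 a2].
by rewrite (le_trans (ler_normD _ _)) // lerD // ?h1 ?h2.
Qed.

Lemma EB_mul {R : realType} (f g : R -> R) : EB f -> EB g -> EB (fun t => f t * g t).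
Proof.
move=> [C1 [T1 h1]] [C2 [T2 h2]]; exists (C1 * C2), (Num.max T1 T2) => t.
rewrite ge_max => /andP[a1 a2].
by rewrite normrM ler_pM // ?h1 ?h2.
Qed.

Lemma EB_shift {R : realType} (f : R -> R) (c : R) : EB f -> EB (fun t => f (t - c)).
Proof.
move=> [C [T0 h]]; exists C, (T0 + c) => t ht; apply: h; by rewrite lerBrDr.
Qed.

Lemma EB_sum {R : realType} (I : Type) (r : seq I) (P : pred I) (F : I -> R -> R) :
  (forall i, P i -> EB (F i)) -> EB (fun t => \sum_(i <- r | P i) F i t).
Proof. apply: fun_sum_closed; [exact: EB_cst | exact: EB_add]. Qed.

Lemma EB_opp {R : realType} (f : R -> R) : EB f -> EB (fun t => - f t).
Proof. by move=> [C [T0 h]]; exists C, T0 => t /h; rewrite normrN. Qed.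

Lemma EB_sub {R : realType} (f g : R -> R) : EB f -> EB g -> EB (fun t => f t - g t).
Proof. by move=> hf hg; apply: EB_add => //; exact: EB_opp. Qed.

Lemma TZ0 {R : realType} : TZ (fun _ : R => 0).
Proof. by move=> e e0; exists 0 => t _; rewrite normr0 ltW. Qed.

Lemma TZ_add {R : realType} (f g : R -> R) : TZ f -> TZ g -> TZ (fun t => f t + g t).
Proof.
move=> h1 h2 e e0.
have e2 : 0 < e / 2 by rewrite divr_gt0.
have [T1 H1] := h1 _ e2; have [T2 H2] := h2 _ e2.
exists (Num.max T1 T2) => t; rewrite ge_max => /andP[a1 a2].
rewrite (le_trans (ler_normD _ _)) // (splitr e) lerD //; [exact: H1 | exact: H2].
Qed.

Lemma TZ_opp {R : realType} (f : R -> R) : TZ f -> TZ (fun t => - f t).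
Proof. by move=> h e /h [T0 H]; exists T0 => t /H; rewrite normrN. Qed.

Lemma TZ_sub {R : realType} (f g : R -> R) : TZ f -> TZ g -> TZ (fun t => f t - g t).
Proof. by move=> hf hg; apply: TZ_add => //; exact: TZ_opp. Qed.

Lemma TZ_sum {R : realType} (I : Type) (r : seq I) (P : pred I) (F : I -> R -> R) :
  (forall i, P i -> TZ (F i)) -> TZ (fun t => \sum_(i <- r | P i) F i t).
Proof. apply: fun_sum_closed; [exact: TZ0 | exact: TZ_add]. Qed.

Lemma TZ_shift {R : realType} (f : R -> R) (c : R) : TZ f -> TZ (fun t => f (t - c)).
Proof.
move=> h e /h [T0 H]; exists (T0 + c) => t ht; apply: H; by rewrite lerBrDr.
Qed.

Lemma TZ_le {R : realType} (f g : R -> R) :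
  TZ g -> (exists T1, forall t, T1 <= t -> `|f t| <= `|g t|) -> TZ f.
Proof.
move=> h [T1 H1] e /h [T0 H]; exists (Num.max T0 T1) => t.
rewrite ge_max => /andP[a0 a1].
exact: le_trans (H1 _ a1) (H _ a0).
Qed.

Lemma TZ_mulEB {R : realType} (f g : R -> R) : TZ f -> EB g -> TZ (fun t => f t * g t).
Proof.
move=> hf [C [T1 H1]] e e0.
have C0 : 0 < `|C| + 1 by rewrite ltr_pwDr.
have e1 : 0 < e / (`|C| + 1) by rewrite divr_gt0.
have [T0 H0] := hf _ e1.
exists (Num.max T0 T1) => t; rewrite ge_max => /andP[a0 a1].
rewrite normrM.
apply: (@le_trans _ _ (e / (`|C| + 1) * (`|C| + 1))); last first.
  by rewrite divfK // gt_eqF.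
rewrite ler_pM //; first exact: H0.
apply: (le_trans (H1 _ a1)); rewrite (le_trans (ler_norm C)) //.
by rewrite lerDl.
Qed.

Lemma TZ_cmul {R : realType} (f : R -> R) (c : R) : TZ f -> TZ (fun t => c * f t).
Proof.
move=> h; have := TZ_mulEB h (EB_cst c).
by under eq_fun do rewrite mulrC.
Qed.

Lemma TZ_sq {R : realType} (f : R -> R) : TZ (fun t => f t ^+ 2) -> TZ f.
Proof.
move=> h e e0.
have [T0 H] := h (e ^+ 2) (exprn_gt0 2 e0).
exists T0 => t /H => hh.
have : `|f t| ^+ 2 <= e ^+ 2 by rewrite -normrX.
rewrite ler_sqr ?normr_ge0 //; exact: ltW.
Qed.

Lemma count_natr {R : realType} (T : Type) (p : pred T) (s : seq T) :
  (count p s)%:R = \sum_(r <- s) (p r)%:R :> R.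
Proof.
elim: s => [|a s IH]; first by rewrite big_nil.
by rewrite big_cons /= natrD IH.
Qed.

Lemma S_decomp {R : realType} n (N : 'I_n -> {set 'I_n}) (B : rel 'I_n)
  (rings : seq (seq 'I_n)) (F : 'I_n -> 'I_n -> R) :
  (forall j i, B j i -> j \in N i) ->
  (forall r, r \in rings -> forall j i, ring_edge r j i -> j \in N i) ->
  (forall j i, j \in N i -> (B j i + count (fun r => ring_edge r j i) rings = 1)%N) ->
  \sum_i \sum_(j < n | j \in N i) F j i =
  \sum_i \sum_(j < n) (B j i)%:R * F j i +
  \sum_(r <- rings) \sum_i \sum_(j < n) (ring_edge r j i)%:R * F j i.
Proof.
move=> hB hr hc.
have e1 : forall i, \sum_(j < n | j \in N i) F j i =
  \sum_(j < n) (B j i)%:R * F j i +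
  \sum_(r <- rings) \sum_(j < n) (ring_edge r j i)%:R * F j i.
  move=> i; rewrite big_mkcond /= (exchange_big_dep xpredT) //= -big_split /=.
  apply: eq_bigr => j _.
  case: (boolP (j \in N i)) => jN.
    have := hc _ _ jN => /(congr1 (fun k => k%:R : R)); rewrite natrD count_natr => h.
    transitivity (((B j i)%:R + \sum_(r <- rings) (ring_edge r j i)%:R) * F j i).
      by rewrite h mul1r.
    by rewrite mulrDl mulr_suml.
  have Bf : B j i = false by apply/negP => /hB; apply/negP.
  rewrite Bf mul0r add0r big_seq_cond big1 // => r /andP[rin _].
  have -> : ring_edge r j i = false by apply/negP => /(hr _ rin); apply/negP.
  by rewrite mul0r.
under eq_bigr do rewrite e1.
rewrite big_split /=; congr (_ + _).
by rewrite exchange_big.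
Qed.

Lemma ring_part {R : realType} n (r : seq 'I_n) (F : 'I_n -> 'I_n -> R) :
  \sum_i \sum_(j < n) (ring_edge r j i)%:R * F j i =
  \sum_(j < n) (j \in r)%:R * F j (next r j).
Proof.
rewrite exchange_big /=; apply: eq_bigr => j _.
rewrite (bigD1 (next r j)) //= /ring_edge eqxx andbT big1 ?addr0 // => i ne.
by rewrite eq_sym (negbTE ne) andbF mul0r.
Qed.

Lemma balance {R : realType} n m (N : 'I_n -> {set 'I_n})
  (K : 'I_n -> 'I_n -> 'M[R]_m) (phi : 'I_n -> 'M[R]_m -> R) :
  link_structure N K ->
  \sum_i \sum_(j < n | j \in N i) phi j (K j i) =
  \sum_i \sum_(j < n | j \in N i) phi i (K j i).
Proof.
move=> [B [rings [hB hr hc]]].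
have hB' : forall j i, B j i -> j \in N i by move=> j i /hB [].
have hr' : forall r, r \in rings -> forall j i, ring_edge r j i -> j \in N i.
  by move=> r /hr [].
rewrite (S_decomp (fun j i => phi j (K j i)) hB' hr' hc).
rewrite (S_decomp (fun j i => phi i (K j i)) hB' hr' hc).
congr (_ + _).
  rewrite exchange_big /=; apply: eq_bigr => a _; apply: eq_bigr => b _.
  case Bab: (B a b).
    by have [_ _ -> ->] := hB _ _ Bab.
  case Bba: (B b a); last by rewrite !mul0r.
  by have [_ _ Bab' _] := hB _ _ Bba; rewrite Bab' in Bab.
rewrite !big_seq; apply: eq_bigr => r rin.
rewrite !ring_part.
have [ur sr redge hK] := hr _ rin.
case E: r sr => [|a r'] // _.
rewrite -E.
have hKr : forall j, j \in r -> K j (next r j) = K a (next r a).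
  move=> j jr; apply: hK; rewrite /ring_edge ?jr ?eqxx //.
  by rewrite E mem_head.
have ninj : injective (next r) by apply: can_inj (prev_next ur).
rewrite [LHS](reindex_inj ninj) /=.
apply: eq_bigr => j _; rewrite mem_next.
case jr: (j \in r); last by rewrite !mul0r.
by rewrite (hKr (next r j)) ?mem_next ?jr // (hKr j jr).
Qed.

Lemma is_deriveD' {R : realType} (f g : R -> R) (t df dg : R) :
  is_derive t 1 f df -> is_derive t 1 g dg ->
  is_derive t 1 (fun s => f s + g s) (df + dg).
Proof. move=> hf hg; exact: (@is_deriveD R R R f g t 1 df dg hf hg). Qed.

Lemma is_deriveB' {R : realType} (f g : R -> R) (t df dg : R) :
  is_derive t 1 f df -> is_derive t 1 g dg ->
  is_derive t 1 (fun s => f s - g s) (df - dg).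
Proof. move=> hf hg; exact: (@is_deriveB R R R f g t 1 df dg hf hg). Qed.

Lemma mvt_gen {R : realType} (f df : R -> R) (a b c : R) :
  (forall t, c < t -> is_derive t 1 f (df t)) -> c < a -> a <= b ->
  exists2 z, a <= z <= b & f b - f a = df z * (b - a).
Proof.
move=> hd ca ab.
have hd' : forall t, t \in `]a, b[%R -> is_derive t 1 f (df t).
  move=> t; rewrite in_itv /= => /andP[ht0 _]; apply: hd; exact: lt_trans ca ht0.
have cf : {within `[a, b], continuous f}.
  apply: continuous_in_subspaceT => t; rewrite inE /= in_itv /= => /andP[ht0 _].
  have ct : c < t by apply: lt_le_trans ca ht0.
  by apply: derivable_cont; case: (hd t ct).
have [z zi ->] := MVT_segment ab hd' cf.
by exists z => //; move: zi; rewrite in_itv.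
Qed.

Lemma barbalat {R : realType} (V g dg : R -> R) (a C T1 : R) :
  (forall t, a < t -> is_derive t 1 V (- g t)) ->
  (forall t, a < t -> is_derive t 1 g (dg t)) ->
  (forall t, T1 <= t -> `|dg t| <= C) ->
  (forall t, a < t -> 0 <= g t) ->
  (forall t, a < t -> 0 <= V t) -> TZ g.
Proof.
move=> hV hg hdg gpos Vpos e e0.
set b := Num.max T1 (a + 1).
have ab : a < b by rewrite lt_max ltrDl ltr01 orbT.
have [//|nT] := pselect (exists T0, forall t, T0 <= t -> `|g t| <= e).
have key T0 : exists t, Num.max T0 b <= t /\ e < `|g t|.
  apply: contrapT => hn; apply: nT; exists (Num.max T0 b) => t ht.
  rewrite leNgt; apply/negP => gt; apply: hn; by exists t.
set C' := `|C| + 1.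
have C'0 : 0 < C' by rewrite ltr_pwDr.
set d := e / (2 * C').
have d0 : 0 < d by rewrite divr_gt0 // mulr_gt0.
have Cd : C' * d = e / 2.
  by rewrite /d; field; rewrite gt_eqF.
have mono s t : b <= s -> s <= t -> V t <= V s.
  move=> bs st; have [z /andP[sz zt] E] := mvt_gen (f:=V) (df:=fun t => - g t) hV (lt_le_trans ab bs) st.
  rewrite -subr_le0 E mulNr oppr_le0 mulr_ge0 ?subr_ge0 //.
  by apply: gpos; apply: lt_le_trans sz; apply: lt_le_trans bs.
have drop t : b <= t -> e < `|g t| -> V (t + d) <= V t - e * d / 2.
  move=> bt gt.
  have at' : a < t by apply: lt_le_trans bt.
  have gt' : e < g t by rewrite ger0_norm ?gpos in gt.
  have td : t <= t + d by rewrite lerDl ltW.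
  have [z /andP[tz zd] E] := mvt_gen (f:=V) (df:=fun t => - g t) hV at' td.
  have [w /andP[tw wz] E2] := mvt_gen (f:=g) (df:=dg) hg at' tz.
  have T1w : T1 <= w.
    apply: le_trans tw; apply: le_trans bt; by rewrite le_max lexx.
  have hw : `|dg w| <= C' by rewrite (le_trans (hdg _ T1w)) // (le_trans (ler_norm C)) // lerDl.
  have hw' : - C' <= dg w by move: hw; rewrite ler_norml => /andP[].
  have zt0 : 0 <= z - t by rewrite subr_ge0.
  have zt1 : z - t <= d by rewrite lerBlDl.
  have h3 : - C' * d <= dg w * (z - t).
    apply: (@le_trans _ _ (- C' * (z - t))).
      by rewrite !mulNr lerN2 ler_wpM2l // ltW.
    by rewrite ler_wpM2r.
  have gz : e / 2 <= g z.
    have : g z = g t + dg w * (z - t) by rewrite -E2 addrC subrK.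
    move=> ->; move: h3; rewrite mulNr Cd => h3.
    have : e / 2 + - (e / 2) = 0 by rewrite subrr.
    move: gt' h3; set u := e / 2; set v := dg w * (z - t); move=> h4 h5 h6.
    have : e = u + u by rewrite /u -splitr.
    lra.
  have h : e / 2 * d <= g z * d by rewrite ler_wpM2r // ltW.
  have E' : e * d / 2 = e / 2 * d by rewrite mulrAC.
  rewrite E'; move: E; rewrite mulNr => E.
  lra.
have step k : exists t, b <= t /\ V t <= V b - k%:R * (e * d / 2).
  elim: k => [|k [t [bt Vt]]].
    by exists b; rewrite mul0r subr0.
  have [s [st gs]] := key t.
  have bs : b <= s by apply: le_trans st; by rewrite le_max lexx orbT.
  have ts : t <= s by apply: le_trans st; by rewrite le_max lexx.
  exists (s + d); split.
    by apply: le_trans bs _; rewrite lerDl ltW.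
  have h1 := drop _ bs gs.
  have h2 := mono _ _ bt ts.
  rewrite -addn1 natrD mulrDl mul1r.
  lra.
have q0 : 0 < e * d / 2 by rewrite divr_gt0 // mulr_gt0.
have Vb0 : 0 <= V b by exact: Vpos.
have := archi_boundP (divr_ge0 Vb0 (ltW q0)).
rewrite ltr_pdivrMr // => hk.
have [t [bt Vt]] := step (Num.bound (V b / (e * d / 2))).
have := Vpos t (lt_le_trans ab bt).
lra.
Qed.

Lemma TZ_delay_diff {R : realType} (f df : R -> R) (c D : R) :
  0 <= c -> c <= D -> (forall t : R, 0 < t -> is_derive t 1 f (df t)) -> TZ df ->
  TZ (fun t => f t - f (t - c)).
Proof.
move=> c0 cD hf hdf e e0.
have D0 : 0 <= D by apply: le_trans cD.
have D1 : 0 < D + 1 by rewrite ltr_wpDl.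
have [T0 H0] := hdf (e / (D + 1)) (divr_gt0 e0 D1).
exists (Num.max (T0 + D) (D + 1)) => t; rewrite ge_max => /andP[h1 h2].
have tc0 : 0 < t - c by rewrite subr_gt0; apply: le_lt_trans cD _; apply: lt_le_trans h2; rewrite ltrDl.
have tct : t - c <= t by rewrite lerBlDr lerDl.
have [z /andP[z1 z2] E] := mvt_gen (f:=f) (df:=df) hf tc0 tct.
rewrite E opprB addrC subrK normrM (ger0_norm c0).
have hz : `|df z| <= e / (D + 1).
  apply: H0; apply: le_trans z1; rewrite lerBrDr; apply: le_trans h1.
  by rewrite lerD2l.
apply: (@le_trans _ _ (e / (D + 1) * D)).
  by apply: ler_pM => //; exact: normr_ge0.
rewrite mulrAC ler_pdivrMr // ler_pM2l //; by rewrite lerDl.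
Qed.

Lemma Bf1_sym {R : realType} {m : nat} (u w : 'cV[R]_m) :
  Bf 1%:M u w = Bf 1%:M w u.
Proof. by apply: Bf_sym; rewrite trmx1. Qed.

Lemma Bf1_mul {R : realType} {m : nat} (K : 'M[R]_m) (u w : 'cV[R]_m) :
  Bf 1%:M u (K *m w) = Bf K u w.
Proof. by rewrite /Bf mulmx1 mulmxA. Qed.

Lemma Bf_sumr {R : realType} {m : nat} (I : finType) (P : pred I) (K : 'M[R]_m)
  (u : 'cV[R]_m) (w : I -> 'cV[R]_m) :
  Bf K u (\sum_(j | P j) w j) = \sum_(j | P j) Bf K u (w j).
Proof. by rewrite /Bf mulmx_sumr summxE. Qed.

Lemma edge_id {R : realType} {m : nat} (K : 'M[R]_m) (xi xj y : 'cV[R]_m) :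
  K^T = K ->
  Bf K xi (y - xi) + Bf K xi (y - xi) + (Bf K xj xj - Bf K y y) =
  - Bf K (y - xi) (y - xi) + (Bf K xj xj - Bf K xi xi).
Proof.
move=> KT; rewrite !BfBl !BfBr (Bf_sym xi y KT).
ring.
Qed.

Definition hf {R : realType} {n m : nat} (K : 'I_n -> 'I_n -> 'M[R]_m)
  (x : 'I_n -> R -> 'cV[R]_m) j i (s : R) : R := Bf (K j i) (x j s) (x j s).

Definition Vf {R : realType} {n m : nat} (N : 'I_n -> {set 'I_n})
  (K : 'I_n -> 'I_n -> 'M[R]_m) (T : 'I_n -> 'I_n -> R)
  (x : 'I_n -> R -> 'cV[R]_m) (t : R) : R :=
  \sum_i Bf 1%:M (x i t) (x i t) +
  \sum_i \sum_(j < n | j \in N i)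
     (antid (hf K x j i) 1 t - antid (hf K x j i) 1 (t - T j i)).

Definition gf {R : realType} {n m : nat} (N : 'I_n -> {set 'I_n})
  (K : 'I_n -> 'I_n -> 'M[R]_m) (T : 'I_n -> 'I_n -> R)
  (x : 'I_n -> R -> 'cV[R]_m) (t : R) : R :=
  \sum_i \sum_(j < n | j \in N i)
     Bf (K j i) (x j (t - T j i) - x i t) (x j (t - T j i) - x i t).

Definition dxf {R : realType} {n m : nat} (N : 'I_n -> {set 'I_n})
  (K : 'I_n -> 'I_n -> 'M[R]_m) (T : 'I_n -> 'I_n -> R)
  (x : 'I_n -> R -> 'cV[R]_m) i (t : R) : 'cV[R]_m :=
  \sum_(j < n | j \in N i) K j i *m (x j (t - T j i) - x i t).

Lemma hf_derive {R : realType} {n m : nat} (N : 'I_n -> {set 'I_n})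
  (K : 'I_n -> 'I_n -> 'M[R]_m) (T : 'I_n -> 'I_n -> R)
  (x : 'I_n -> R -> 'cV[R]_m) :
  (forall (i : 'I_n) (t : R), 0 < t -> is_derive t 1 (x i) (dxf N K T x i t)) ->
  forall j i (s : R), 0 < s -> is_derive s 1 (hf K x j i)
     (Bf (K j i) (dxf N K T x j s) (x j s) + Bf (K j i) (x j s) (dxf N K T x j s)).
Proof. by move=> hd j i s s0; apply: is_derive_Bf; apply: hd. Qed.

Lemma V_derive {R : realType} {n m : nat} (N : 'I_n -> {set 'I_n})
  (K : 'I_n -> 'I_n -> 'M[R]_m) (T : 'I_n -> 'I_n -> R) (D : R)
  (x : 'I_n -> R -> 'cV[R]_m) : 0 <= D ->
  (forall i j, j \in N i -> sym_posdef (K j i)) ->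
  (forall i j, j \in N i -> 0 <= T j i /\ T j i <= D) ->
  link_structure N K ->
  (forall (i : 'I_n) (t : R), 0 < t -> is_derive t 1 (x i) (dxf N K T x i t)) ->
  forall t : R, D + 1 < t -> is_derive t 1 (Vf N K T x) (- gf N K T x t).
Proof.
move=> D0 hK hT hL hd t tD.
have t0 : 0 < t by apply: le_lt_trans tD; rewrite addr_ge0.
have hcont : forall j i s, 1 <= s -> {for s, continuous (hf K x j i)}.
  move=> j i s s1; apply: derivable_cont.
  by case: (hf_derive hd j i (lt_le_trans ltr01 s1)).
apply: is_derive_eq.
  rewrite /Vf; apply: is_deriveD'.
    apply: (is_derive_bigsum (f := fun i s => Bf 1%:M (x i s) (x i s))) => i _.
    apply: is_derive_Bf; apply: hd; exact: t0.
  apply: is_derive_bigsum => i _.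
  apply: is_derive_bigsum => j jN.
  apply: is_deriveB'.
    apply: antid_derive; first exact: hcont.
    apply: le_lt_trans tD; rewrite lerDr; have [h1 h2] := hT _ _ jN; exact: le_trans h2.
  apply: is_derive_delay; apply: antid_derive; first exact: hcont.
  have [h1 h2] := hT _ _ jN.
  by rewrite ltrBrDl; apply: le_lt_trans tD; rewrite lerD2r.
rewrite /=.
have E1 : forall i, Bf 1%:M (dxf N K T x i t) (x i t) + Bf 1%:M (x i t) (dxf N K T x i t)
   = \sum_(j < n | j \in N i) (Bf (K j i) (x i t) (x j (t - T j i) - x i t)
        + Bf (K j i) (x i t) (x j (t - T j i) - x i t)).
  by move=> i; rewrite Bf1_sym /dxf Bf_sumr -big_split; apply: eq_bigr => j _; rewrite Bf1_mul.
have E2 : forall i,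
   \sum_(j < n | j \in N i) (Bf (K j i) (x i t) (x j (t - T j i) - x i t)
        + Bf (K j i) (x i t) (x j (t - T j i) - x i t)) +
   \sum_(j < n | j \in N i) (hf K x j i t - hf K x j i (t - T j i)) =
   \sum_(j < n | j \in N i) (- Bf (K j i) (x j (t - T j i) - x i t) (x j (t - T j i) - x i t))
   + (\sum_(j < n | j \in N i) Bf (K j i) (x j t) (x j t)
      - \sum_(j < n | j \in N i) Bf (K j i) (x i t) (x i t)).
  move=> i; rewrite -big_split -sumrB -big_split; apply: eq_bigr => j jN.
  rewrite /hf; apply: edge_id; by case: (hK _ _ jN).
rewrite (eq_bigr _ (fun i _ => E1 i)) -big_split /=.
rewrite (eq_bigr _ (fun i _ => E2 i)) big_split /= sumrB.
rewrite (balance (fun k M => Bf M (x k t) (x k t)) hL) subrr addr0.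
by rewrite /gf -sumrN; apply: eq_bigr => i _; rewrite sumrN.
Qed.

Lemma Bf1_entry {R : realType} {m : nat} (v : 'cV[R]_m) (a : 'I_m) :
  v a 0 ^+ 2 <= Bf 1%:M v v.
Proof.
have -> : Bf 1%:M v v = \sum_(b < m) v b 0 ^+ 2.
  rewrite /Bf mulmx1 mxE; apply: eq_bigr => b _; by rewrite mxE expr2.
rewrite (bigD1 a) //= lerDl; apply: sumr_ge0 => b _; exact: sqr_ge0.
Qed.

Lemma gf_ge0 {R : realType} {n m : nat} (N : 'I_n -> {set 'I_n})
  (K : 'I_n -> 'I_n -> 'M[R]_m) (T : 'I_n -> 'I_n -> R)
  (x : 'I_n -> R -> 'cV[R]_m) :
  (forall i j, j \in N i -> sym_posdef (K j i)) -> forall t, 0 <= gf N K T x t.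
Proof.
move=> hK t; apply: sumr_ge0 => i _; apply: sumr_ge0 => j jN.
exact: Bf_ge0 (hK _ _ jN).
Qed.

Lemma Vf_lower {R : realType} {n m : nat} (N : 'I_n -> {set 'I_n})
  (K : 'I_n -> 'I_n -> 'M[R]_m) (T : 'I_n -> 'I_n -> R) (D : R)
  (x : 'I_n -> R -> 'cV[R]_m) : 0 <= D ->
  (forall i j, j \in N i -> sym_posdef (K j i)) ->
  (forall i j, j \in N i -> 0 <= T j i /\ T j i <= D) ->
  (forall (i : 'I_n) (t : R), 0 < t -> is_derive t 1 (x i) (dxf N K T x i t)) ->
  forall t : R, D + 1 < t -> \sum_i Bf 1%:M (x i t) (x i t) <= Vf N K T x t.
Proof.
move=> D0 hK hT hd t tD.
rewrite /Vf lerDl; apply: sumr_ge0 => i _; apply: sumr_ge0 => j jN.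
have [h1 h2] := hT _ _ jN.
have hcont : forall (s : R), 1 <= s -> {for s, continuous (hf K x j i)}.
  move=> s s1; apply: derivable_cont.
  by case: (hf_derive hd j i (lt_le_trans ltr01 s1)).
have c1 : 1 < t - T j i.
  by rewrite ltrBrDl; apply: le_lt_trans tD; rewrite lerD2r.
have tt : t - T j i <= t by rewrite lerBlDr lerDl.
have [z /andP[z1 z2] ->] := mvt_gen (f:=antid (hf K x j i) 1) (df:=hf K x j i)
   (fun s hs => antid_derive hcont hs) c1 tt.
apply: mulr_ge0; first exact: Bf_ge0 (hK _ _ jN).
by rewrite subr_ge0.
Qed.

Lemma Vf_mono {R : realType} {n m : nat} (N : 'I_n -> {set 'I_n})
  (K : 'I_n -> 'I_n -> 'M[R]_m) (T : 'I_n -> 'I_n -> R) (D : R)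
  (x : 'I_n -> R -> 'cV[R]_m) : 0 <= D ->
  (forall i j, j \in N i -> sym_posdef (K j i)) ->
  (forall i j, j \in N i -> 0 <= T j i /\ T j i <= D) ->
  link_structure N K ->
  (forall (i : 'I_n) (t : R), 0 < t -> is_derive t 1 (x i) (dxf N K T x i t)) ->
  forall s t : R, D + 1 < s -> s <= t -> Vf N K T x t <= Vf N K T x s.
Proof.
move=> D0 hK hT hL hd s t sD st.
have [z /andP[z1 z2] E] := mvt_gen (f:=Vf N K T x) (df:=fun t => - gf N K T x t)
   (V_derive D0 hK hT hL hd) sD st.
rewrite -subr_le0 E mulNr oppr_le0 mulr_ge0 ?subr_ge0 //.
exact: gf_ge0.
Qed.

Lemma x_EB {R : realType} {n m : nat} (N : 'I_n -> {set 'I_n})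
  (K : 'I_n -> 'I_n -> 'M[R]_m) (T : 'I_n -> 'I_n -> R) (D : R)
  (x : 'I_n -> R -> 'cV[R]_m) : 0 <= D ->
  (forall i j, j \in N i -> sym_posdef (K j i)) ->
  (forall i j, j \in N i -> 0 <= T j i /\ T j i <= D) ->
  link_structure N K ->
  (forall (i : 'I_n) (t : R), 0 < t -> is_derive t 1 (x i) (dxf N K T x i t)) ->
  forall i a, EB (fun t => x i t a 0).
Proof.
move=> D0 hK hT hL hd i a.
exists (1 + Vf N K T x (D + 2)), (D + 2) => t tD.
have D12 : D + 1 < D + 2 by rewrite ltrD2l ltr1n.
have tD1 : D + 1 < t by apply: lt_le_trans tD.
have h1 : x i t a 0 ^+ 2 <= Vf N K T x (D + 2).
  apply: le_trans (Vf_mono D0 hK hT hL hd D12 tD).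
  apply: le_trans (Vf_lower D0 hK hT hd tD1).
  apply: le_trans (Bf1_entry _ a) _.
  rewrite (bigD1 i) //= lerDl; apply: sumr_ge0 => k _.
  by apply: le_trans (Bf1_entry (x k t) a); exact: sqr_ge0.
set y := x i t a 0.
apply: (@le_trans _ _ (1 + y ^+ 2)); last by rewrite lerD2l.
rewrite -(real_normK (num_real y)).
have := normr_ge0 y; set w := `|y|.
nra.
Qed.

Lemma is_derive_delay_mx {R : realType} {m k : nat} (y : R -> 'M[R]_(m, k))
  (dy : 'M[R]_(m, k)) (c t : R) :
  is_derive (t - c) 1 y dy -> is_derive t 1 (fun s => y (s - c)) dy.
Proof.
move=> h.
have he : forall a b, is_derive t 1 (fun s => y (s - c) a b) (dy a b).
  by move=> a b; apply: (is_derive_delay (f := fun s => y s a b)); exact: is_derive_entry.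
have hd : derivable (fun s => y (s - c)) t 1.
  by apply/derivable_mxP => a b; case: (he a b).
split => //; rewrite derive_mx //; apply/matrixP => a b; rewrite mxE.
by case: (he a b).
Qed.

Lemma is_deriveB_mx {R : realType} {m k : nat} (f g : R -> 'M[R]_(m, k))
  (df dg : 'M[R]_(m, k)) (t : R) :
  is_derive t 1 f df -> is_derive t 1 g dg ->
  is_derive t 1 (fun s => f s - g s) (df - dg).
Proof. move=> hf hg; exact: (@is_deriveB R R _ f g t 1 df dg hf hg). Qed.

Definition dgf {R : realType} {n m : nat} (N : 'I_n -> {set 'I_n})
  (K : 'I_n -> 'I_n -> 'M[R]_m) (T : 'I_n -> 'I_n -> R)
  (x : 'I_n -> R -> 'cV[R]_m) (t : R) : R :=
  \sum_i \sum_(j < n | j \in N i)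
     (Bf (K j i) (dxf N K T x j (t - T j i) - dxf N K T x i t) (x j (t - T j i) - x i t)
    + Bf (K j i) (x j (t - T j i) - x i t) (dxf N K T x j (t - T j i) - dxf N K T x i t)).

Lemma g_derive {R : realType} {n m : nat} (N : 'I_n -> {set 'I_n})
  (K : 'I_n -> 'I_n -> 'M[R]_m) (T : 'I_n -> 'I_n -> R) (D : R)
  (x : 'I_n -> R -> 'cV[R]_m) : 0 <= D ->
  (forall i j, j \in N i -> 0 <= T j i /\ T j i <= D) ->
  (forall (i : 'I_n) (t : R), 0 < t -> is_derive t 1 (x i) (dxf N K T x i t)) ->
  forall t : R, D < t -> is_derive t 1 (gf N K T x) (dgf N K T x t).
Proof.
move=> D0 hT hd t tD.
have t0 : 0 < t by apply: le_lt_trans tD.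
apply: (is_derive_bigsum (f := fun i s => \sum_(j < n | j \in N i)
     Bf (K j i) (x j (s - T j i) - x i s) (x j (s - T j i) - x i s))) => i _.
apply: (is_derive_bigsum (f := fun j s =>
     Bf (K j i) (x j (s - T j i) - x i s) (x j (s - T j i) - x i s))) => j jN.
have [h1 h2] := hT _ _ jN.
have tT : 0 < t - T j i by rewrite subr_gt0; apply: le_lt_trans tD.
have he : is_derive t 1 (fun s => x j (s - T j i) - x i s)
            (dxf N K T x j (t - T j i) - dxf N K T x i t).
  apply: is_deriveB_mx; last exact: hd.
  by apply: is_derive_delay_mx; exact: hd.
by apply: is_derive_Bf; exact: he.
Qed.

Lemma EB_Bf {R : realType} {m : nat} (K : 'M[R]_m) (u w : R -> 'cV[R]_m) :
  (forall a, EB (fun t => u t a 0)) -> (forall a, EB (fun t => w t a 0)) ->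
  EB (fun t => Bf K (u t) (w t)).
Proof.
move=> hu hw.
have -> : (fun t => Bf K (u t) (w t)) =
  (fun t => \sum_(b < m) \sum_(a < m) K a b * (u t a 0 * w t b 0)).
  by apply/funext => t; rewrite BfE.
apply: EB_sum => b _; apply: EB_sum => a _.
apply: EB_mul; first exact: EB_cst.
exact: EB_mul.
Qed.

Lemma EB_mxB {R : realType} {m : nat} (u w : R -> 'cV[R]_m) :
  (forall a, EB (fun t => u t a 0)) -> (forall a, EB (fun t => w t a 0)) ->
  forall a, EB (fun t => (u t - w t) a 0).
Proof.
move=> hu hw a.
have -> : (fun t => (u t - w t) a 0) = (fun t => u t a 0 - w t a 0).
  by apply/funext => t; rewrite !mxE.
exact: EB_sub.
Qed.

Lemma TZ_mxB {R : realType} {m : nat} (u w : R -> 'cV[R]_m) :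
  (forall a, TZ (fun t => u t a 0)) -> (forall a, TZ (fun t => w t a 0)) ->
  forall a, TZ (fun t => (u t - w t) a 0).
Proof.
move=> hu hw a.
have -> : (fun t => (u t - w t) a 0) = (fun t => u t a 0 - w t a 0).
  by apply/funext => t; rewrite !mxE.
exact: TZ_sub.
Qed.

Lemma dxf_entry {R : realType} {n m : nat} (N : 'I_n -> {set 'I_n})
  (K : 'I_n -> 'I_n -> 'M[R]_m) (T : 'I_n -> 'I_n -> R)
  (x : 'I_n -> R -> 'cV[R]_m) i (t : R) a :
  dxf N K T x i t a 0 = \sum_(j < n | j \in N i) \sum_(b < m)
     K j i a b * (x j (t - T j i) - x i t) b 0.
Proof.
rewrite /dxf summxE; apply: eq_bigr => j _; rewrite mxE; apply: eq_bigr => b _.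
by [].
Qed.

Lemma dxf_EB {R : realType} {n m : nat} (N : 'I_n -> {set 'I_n})
  (K : 'I_n -> 'I_n -> 'M[R]_m) (T : 'I_n -> 'I_n -> R)
  (x : 'I_n -> R -> 'cV[R]_m) :
  (forall i a, EB (fun t => x i t a 0)) ->
  forall i a, EB (fun t => dxf N K T x i t a 0).
Proof.
move=> hx i a.
under eq_fun do rewrite dxf_entry.
apply: EB_sum => j _; apply: EB_sum => b _; apply: EB_mul; first exact: EB_cst.
apply: (EB_mxB (u := fun t => x j (t - T j i)) (w := x i)) => c; last exact: hx.
exact: (EB_shift (f := fun t => x j t c 0)).
Qed.

Lemma dxf_TZ {R : realType} {n m : nat} (N : 'I_n -> {set 'I_n})
  (K : 'I_n -> 'I_n -> 'M[R]_m) (T : 'I_n -> 'I_n -> R)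
  (x : 'I_n -> R -> 'cV[R]_m) :
  (forall i j, j \in N i -> forall a, TZ (fun t => (x j (t - T j i) - x i t) a 0)) ->
  forall i a, TZ (fun t => dxf N K T x i t a 0).
Proof.
move=> he i a.
under eq_fun do rewrite dxf_entry.
apply: TZ_sum => j jN; apply: TZ_sum => b _; apply: TZ_cmul; exact: he.
Qed.

Lemma dgf_EB {R : realType} {n m : nat} (N : 'I_n -> {set 'I_n})
  (K : 'I_n -> 'I_n -> 'M[R]_m) (T : 'I_n -> 'I_n -> R)
  (x : 'I_n -> R -> 'cV[R]_m) :
  (forall i a, EB (fun t => x i t a 0)) -> EB (dgf N K T x).
Proof.
move=> hx.
have hdx := dxf_EB N K T hx.
have hsh : forall (f : R -> 'cV[R]_m) c, (forall a, EB (fun t => f t a 0)) ->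
     forall a, EB (fun t => f (t - c) a 0).
  by move=> f c hf a; exact: (EB_shift (f := fun t => f t a 0)).
apply: EB_sum => i _; apply: EB_sum => j _; apply: EB_add.
  apply: EB_Bf.
    apply: (EB_mxB (u := fun t => dxf N K T x j (t - T j i)) (w := dxf N K T x i)).
      exact: (hsh (dxf N K T x j)).
    exact: hdx.
  apply: (EB_mxB (u := fun t => x j (t - T j i)) (w := x i)); last exact: hx.
  exact: (hsh (x j)).
apply: EB_Bf.
  apply: (EB_mxB (u := fun t => x j (t - T j i)) (w := x i)); last exact: hx.
  exact: (hsh (x j)).
apply: (EB_mxB (u := fun t => dxf N K T x j (t - T j i)) (w := dxf N K T x i)).
  exact: (hsh (dxf N K T x j)).
exact: hdx.
Qed.

Lemma TZ_cvg {R : realType} {m : nat} (y : R -> 'cV[R]_m) :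
  (forall a, TZ (fun t => y t a 0)) -> y t @[t --> +oo] --> (0 : 'cV[R]_m).
Proof.
move=> h; apply/cvgrPdist_le => e e0.
have : \forall t \near +oo, forall a : 'I_m * 'I_1, `|y t a.1 a.2| <= e.
  apply: filter_forall => -[a b].
  have [T0 H] := h a e e0.
  exists T0; split; first exact: num_real.
  by move=> t /ltW /H; rewrite (ord1 b).
apply: filter_app; near=> t => ht.
rewrite sub0r normrN /Num.Def.normr /= mx_normrE.
apply: bigmax_le => [|ij _]; [exact: ltW | exact: ht].
Unshelve. all: by end_near.
Qed.

Lemma Bf_ge0_1 {R : realType} {m : nat} (v : 'cV[R]_m) : 0 <= Bf 1%:M v v.
Proof.
have -> : Bf 1%:M v v = \sum_(b < m) v b 0 ^+ 2.
  rewrite /Bf mulmx1 mxE; apply: eq_bigr => b _; by rewrite mxE expr2.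
by apply: sumr_ge0 => b _; exact: sqr_ge0.
Qed.

Lemma edge_TZ {R : realType} (n m : nat)
  (N : 'I_n -> {set 'I_n}) (K : 'I_n -> 'I_n -> 'M[R]_m)
  (T : 'I_n -> 'I_n -> R) (D : R)
  (x : 'I_n -> R -> 'cV[R]_m) : 0 <= D ->
  (forall i j, j \in N i -> sym_posdef (K j i)) ->
  (forall i j, j \in N i -> 0 <= T j i /\ T j i <= D) ->
  link_structure N K ->
  (forall (i : 'I_n) (t : R), 0 < t -> is_derive t 1 (x i) (dxf N K T x i t)) ->
  forall i j, j \in N i -> forall a, TZ (fun t => x j t a 0 - x i t a 0).
Proof.
move=> D0 hK hT hL hd.
have hx := x_EB D0 hK hT hL hd.
have [C [T1 hC]] := dgf_EB N K T hx.
have hg : TZ (gf N K T x).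
  apply: (barbalat (V := Vf N K T x) (dg := dgf N K T x) (a := D + 1) (C := C) (T1 := T1)).
  - exact: V_derive.
  - move=> t tD; apply: (g_derive D0 hT hd); apply: lt_trans tD; by rewrite ltrDl.
  - exact: hC.
  - by move=> t _; exact: gf_ge0.
  - move=> t tD; apply: le_trans (Vf_lower D0 hK hT hd tD).
    by apply: sumr_ge0 => k _; exact: Bf_ge0_1.
have hterm : forall i j, j \in N i -> TZ (fun t =>
     Bf (K j i) (x j (t - T j i) - x i t) (x j (t - T j i) - x i t)).
  move=> i j jN; apply: (TZ_le hg); exists 0 => t _.
  rewrite !ger0_norm ?gf_ge0 ?Bf_ge0 //; last exact: hK.
  rewrite /gf (bigD1 i) //= (bigD1 j jN) //= -addrA lerDl.
  apply: addr_ge0.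
    by apply: sumr_ge0 => k /andP[kN _]; apply: Bf_ge0; exact: hK.
  by apply: sumr_ge0 => k _; apply: sumr_ge0 => l lN; apply: Bf_ge0; exact: hK.
have he : forall i j, j \in N i -> forall a,
    TZ (fun t => (x j (t - T j i) - x i t) a 0).
  move=> i j jN a.
  have [C0 [C00 hC0]] := coord_bound a (hK _ _ jN).
  apply: TZ_sq; apply: (TZ_le (TZ_cmul C0 (hterm _ _ jN))); exists 0 => t _.
  rewrite ger0_norm ?sqr_ge0 // (le_trans (hC0 _)) //; exact: ler_norm.
have hdx := @dxf_TZ _ _ _ N K T x he.
move=> i j jN a.
have [h1 h2] := hT _ _ jN.
have hdel := TZ_delay_diff (f := fun s => x j s a 0) (df := fun s => dxf N K T x j s a 0)
  h1 h2 (fun s s0 => is_derive_entry a 0 (hd j s s0)) (hdx j a).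
suff -> : (fun t => x j t a 0 - x i t a 0) = (fun t => (x j (t - T j i) - x i t) a 0
   + (x j t a 0 - x j (t - T j i) a 0)) by exact: TZ_add (he _ _ jN a) hdel.
by apply/funext => t; rewrite !mxE; ring.
Qed.

Unset Implicit Arguments. Set Strict Implicit.

Theorem theorem3 (R : realType) (n m : nat)
  (N : 'I_n -> {set 'I_n}) (K : 'I_n -> 'I_n -> 'M[R]_m)
  (T : 'I_n -> 'I_n -> R) (D : R)
  (x : 'I_n -> R -> 'cV[R]_m) :
  (0 < n)%N ->
  (forall i, i \notin N i) ->
  (forall i j, j \in N i -> sym_posdef (K j i)) ->
  (forall i j, j \in N i -> 0 <= T j i /\ T j i <= D) ->
  network_connected N ->
  link_structure N K ->
  (* x is a solution: continuous on [-D, +oo) (continuous initial functions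
     on [-D, 0]) and satisfying the delayed dynamics for t > 0 *)
  (forall i, {within [set t | - D <= t], continuous (x i)}) ->
  (forall (i : 'I_n) (t : R), 0 < t ->
     is_derive t (1 : R) (x i)
       (\sum_(j < n | j \in N i) K j i *m (x j (t - T j i) - x i t))) ->
  forall i j, (x i t - x j t) @[t --> +oo] --> (0 : 'cV[R]_m).
Proof.
move=> n0 hself hK hT hconn hL hcont hdyn.
set D' := Num.max D 0.
have D0 : 0 <= D' by rewrite le_max lexx orbT.
have hT' : forall i j, j \in N i -> 0 <= T j i /\ T j i <= D'.
  by move=> i j jN; have [h1 h2] := hT _ _ jN; split => //; rewrite le_max h2.
have hE := @edge_TZ R n m N K T D' x D0 hK hT' hL hdyn.
have P : forall u v, forall a, TZ (fun t => x u t a 0 - x v t a 0).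
  move=> u v; have /connectP [p pth ->] := hconn u v.
  elim: p u pth => [|w p IH] u /=.
    move=> _ a; under eq_fun do rewrite subrr; exact: TZ0.
  move=> /andP[euw pth] a.
  have h1 : TZ (fun t => x u t a 0 - x w t a 0).
    case/orP: euw => [uN | wN]; first exact: hE.
    have := TZ_opp (hE _ _ wN a).
    by under eq_fun do rewrite opprB.
  have := TZ_add h1 (IH w pth a).
  by under eq_fun do rewrite addrA subrK.
move=> i j; apply: TZ_cvg => a.
suff -> : (fun t => (x i t - x j t) a 0) = (fun t => x i t a 0 - x j t a 0) by exact: P.
by apply/funext => t; rewrite !mxE.
Qed.
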